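(* Let $H$ be a separable infinite-dimensional Hilbert space, let $\mathcal{I}$ be the set of all isometries on $H$ endowed with the strong operator topology, and let $\mathcal{U}\subset\mathcal{I}$ be the set of all unitary operators on $H$. Then $\mathcal{U}$ is residual in $\mathcal{I}$, i.e., $\mathcal{I}\setminus\mathcal{U}$ is of first category in $\mathcal{I}$.
   Context: A subset of a topological space is of first category if it is a countable union of nowhere dense sets, and residual if its complement is of first category. The space $\mathcal{I}$ with the strong operator topology is a complete metric space, e.g. with the metric $d(T,S)=\sum_{j\ge1}\frac{\|Tx_j-Sx_j\|}{2^j\|x_j\|}$ for a fixed dense sequence $\{x_j\}$ in $H\setminus\{0\}$. *)

(* Defs.v *)
From HB Require Import structures.
From mathcomp Require Import all_boot all_order all_algebra.
From mathcomp Require Import complex.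
From mathcomp Require Import boolp classical_sets reals.
Set Implicit Arguments. Unset Strict Implicit. Unset Printing Implicit Defensive.
Import Order.TTheory GRing.Theory Num.Theory ComplexField.
Local Open Scope ring_scope.
Local Open Scope classical_set_scope.

Section Hilbert.
Variables (R : realType) (H : lmodType R[i]) (ip : H -> H -> R[i]).

Definition hnorm (x : H) : R := Num.sqrt (complex.Re (ip x x)).

Definition inner_product : Prop :=
  [/\ forall (a : R[i]) (x y z : H), ip (a *: x + y) z = a * ip x z + ip y z,
      forall x y : H, ip y x = (ip x y)^*,
      forall x : H, 0 <= ip x x &
      forall x : H, ip x x = 0 -> x = 0].

Definition complete_space : Prop :=
  forall u : nat -> H,
    (forall e : R, 0 < e -> exists N, forall m n, (N <= m)%N -> (N <= n)%N ->
        hnorm (u m - u n) < e) ->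
    exists l : H, forall e : R, 0 < e -> exists N, forall n, (N <= n)%N ->
        hnorm (u n - l) < e.

Definition hilbert_space : Prop := inner_product /\ complete_space.

Definition separable_space : Prop :=
  exists d : nat -> H, forall (x : H) (e : R), 0 < e -> exists j, hnorm (x - d j) < e.

Definition infinite_dimensional : Prop :=
  forall n : nat, exists v : 'I_n -> H,
    forall c : 'I_n -> R[i], \sum_(i < n) c i *: v i = 0 -> forall i, c i = 0.

Definition linear_op (T : H -> H) : Prop :=
  forall (a : R[i]) (x y : H), T (a *: x + y) = a *: T x + T y.

Definition isometry (T : H -> H) : Prop :=
  linear_op T /\ forall x : H, hnorm (T x) = hnorm x.

(* unitary: U^* U = U U^* = I, where S is the adjoint of U *)
Definition unitary (T : H -> H) : Prop :=
  linear_op T /\ exists S : H -> H,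
    [/\ forall x y : H, ip (T x) y = ip x (S y),
        forall x, S (T x) = x & forall x, T (S x) = x].

Definition isometries : set (H -> H) := [set T | isometry T].
Definition unitaries : set (H -> H) := [set T | unitary T].

(* Relative topology on a set X of operators induced by the strong operator
   topology: basic neighbourhoods of T are {S | ||(S - T) x_i|| < e, i < n}. *)
Definition sot_open_in (X A : set (H -> H)) : Prop :=
  A `<=` X /\
  forall T, A T -> exists (n : nat) (x : 'I_n -> H) (e : R), 0 < e /\
    forall S, X S -> (forall i, hnorm (S (x i) - T (x i)) < e) -> A S.

Definition closure_in (X A : set (H -> H)) : set (H -> H) :=
  [set T | X T /\ forall U, sot_open_in X U -> U T -> exists S, U S /\ A S].

Definition interior_in (X B : set (H -> H)) : set (H -> H) :=
  [set T | exists U, [/\ sot_open_in X U, U `<=` B & U T]].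

Definition nowhere_dense_in (X A : set (H -> H)) : Prop :=
  A `<=` X /\ interior_in X (closure_in X A) = set0.

Definition first_category_in (X A : set (H -> H)) : Prop :=
  exists N : nat -> set (H -> H),
    (forall n, nowhere_dense_in X (N n)) /\ A = \bigcup_n N n.

Definition residual_in (X A : set (H -> H)) : Prop :=
  A `<=` X /\ first_category_in X (X `\` A).

End Hilbert.

(* Main.v *)
Require Import Defs.
From HB Require Import structures.
From mathcomp Require Import all_boot all_order all_algebra.
From mathcomp Require Import complex.
From mathcomp Require Import boolp classical_sets reals.
From mathcomp Require Import ring lra.
Import Order.TTheory GRing.Theory Num.Theory ComplexField.
Local Open Scope ring_scope.
Local Open Scope classical_set_scope.
Local Open Scope complex_scope.
Set Implicit Arguments. Unset Strict Implicit. Unset Printing Implicit Defensive.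

Section Basic.
Variables (R : realType) (H : lmodType R[i]) (ip : H -> H -> R[i]).
Hypothesis hip : inner_product ip.

Lemma conjR (t : R) : Num.conj (t%:C) = t%:C.
Proof. by rewrite /Num.conj /= oppr0. Qed.

Lemma ReM_real (t : R) (w : R[i]) : complex.Re (t%:C * w) = t * complex.Re w.
Proof. case: w => a b /=. by rewrite mul0r subr0. Qed.

Lemma Re_conj (w : R[i]) : complex.Re (Num.conj w) = complex.Re w.
Proof. by case: w. Qed.

Lemma ipA x y z a : ip (a *: x + y) z = a * ip x z + ip y z.
Proof. by case: hip. Qed.
Lemma ipC x y : ip y x = Num.conj (ip x y).
Proof. by case: hip => _ h _ _; rewrite h. Qed.

Lemma ip0l z : ip 0 z = 0.
Proof.
have := ipA 0 0 z 1. rewrite scale1r addr0 mul1r => h.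
by apply/(addrI (ip 0 z)); rewrite addr0 -h.
Qed.

Lemma ipDl x y z : ip (x + y) z = ip x z + ip y z.
Proof. by rewrite -{1}[x]scale1r ipA mul1r. Qed.
Lemma ipZl a x z : ip (a *: x) z = a * ip x z.
Proof. by rewrite -[a *: x]addr0 ipA ip0l addr0. Qed.
Lemma ipNl x z : ip (- x) z = - ip x z.
Proof. by rewrite -scaleN1r ipZl mulN1r. Qed.
Lemma ipBl x y z : ip (x - y) z = ip x z - ip y z.
Proof. by rewrite ipDl ipNl. Qed.
Lemma ip0r z : ip z 0 = 0.
Proof. by rewrite ipC ip0l; apply/eqP; rewrite conjC_eq0. Qed.
Lemma ipDr x y z : ip z (x + y) = ip z x + ip z y.
Proof. by rewrite ipC ipDl rmorphD /= -!ipC. Qed.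
Lemma ipZr a x z : ip z (a *: x) = Num.conj a * ip z x.
Proof. by rewrite ipC ipZl rmorphM /= -ipC. Qed.
Lemma ipNr x z : ip z (- x) = - ip z x.
Proof. by rewrite ipC ipNl rmorphN /= -ipC. Qed.
Lemma ipBr x y z : ip z (x - y) = ip z x - ip z y.
Proof. by rewrite ipDr ipNr. Qed.

Lemma ip_self x : ip x x = (hnorm ip x ^+ 2)%:C.
Proof.
case: hip => _ _ hpos _. have := hpos x.
rewrite /hnorm. case: (ip x x) => a b. rewrite lecE /= => /andP[/eqP b0 a0].
by rewrite sqr_sqrtr // b0.
Qed.

Lemma hnorm_ge0 x : 0 <= hnorm ip x.
Proof. exact: sqrtr_ge0. Qed.

Lemma hnorm_eq0 x : hnorm ip x = 0 -> x = 0.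
Proof.
move=> h. case: hip => _ _ _ h0. apply: h0. by rewrite ip_self h expr0n.
Qed.

Lemma hnorm0 : hnorm ip 0 = 0.
Proof. by rewrite /hnorm ip0l /= sqrtr0. Qed.

Lemma hnormN x : hnorm ip (- x) = hnorm ip x.
Proof. by rewrite /hnorm ipNl ipNr opprK. Qed.

Lemma hnormB x y : hnorm ip (x - y) = hnorm ip (y - x).
Proof. by rewrite -hnormN opprB. Qed.

Lemma hnorm_sq x : hnorm ip x ^+ 2 = complex.Re (ip x x).
Proof. by rewrite ip_self. Qed.

Lemma hnormZ (t : R) x : hnorm ip (t%:C *: x) = `|t| * hnorm ip x.
Proof.
rewrite /hnorm ipZl ipZr conjR !ReM_real mulrA sqrtrM; last by rewrite -expr2 sqr_ge0.
by rewrite -expr2 sqrtr_sqr.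
Qed.

Lemma sqD x y : hnorm ip (x + y) ^+ 2 =
  hnorm ip x ^+ 2 + 2 * complex.Re (ip x y) + hnorm ip y ^+ 2.
Proof.
rewrite !hnorm_sq ipDl !ipDr [ip y x]ipC.
have E (u v : R[i]) : complex.Re (u + v) = complex.Re u + complex.Re v by case: u; case: v.
rewrite !E Re_conj. ring.
Qed.


Lemma CS x y : complex.Re (ip x y) <= hnorm ip x * hnorm ip y.
Proof.
set b := complex.Re (ip x y).
have hx := hnorm_ge0 x; have hy := hnorm_ge0 y.
have [hy0|hyp] := eqVneq (hnorm ip y) 0.
  have y0 : y = 0 by apply: hnorm_eq0.
  by rewrite /b y0 ip0r hnorm0 mulr0.
set q := hnorm ip y ^+ 2.
have qp : 0 < q by rewrite /q exprn_gt0 // lt_neqAle eq_sym hyp hy.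
set t := - b / q.
have tq : t * q = - b by rewrite /t divfK // gt_eqF.
have := sqr_ge0 (hnorm ip (x + t%:C *: y)).
rewrite sqD hnormZ ipZr conjR ReM_real -/b exprMn real_normK ?num_real // -/q => h.
have h2 : 0 <= q * (hnorm ip x ^+ 2 + 2 * (t * b) + t ^+ 2 * q).
  by rewrite mulr_ge0 // ltW.
have h3 : q * (hnorm ip x ^+ 2 + 2 * (t * b) + t ^+ 2 * q) =
   q * hnorm ip x ^+ 2 + 2 * b * (t * q) + (t * q) ^+ 2 by ring.
rewrite h3 tq in h2.
have h4 : b ^+ 2 <= (hnorm ip x * hnorm ip y) ^+ 2.
  rewrite exprMn -/q. nra.
have h5 : 0 <= hnorm ip x * hnorm ip y by rewrite mulr_ge0.
nra.
Qed.

Lemma triangle x y : hnorm ip (x + y) <= hnorm ip x + hnorm ip y.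
Proof.
have h1 := CS x y; have hx := hnorm_ge0 x; have hy := hnorm_ge0 y.
have hxy := hnorm_ge0 (x + y).
have h2 : hnorm ip (x + y) ^+ 2 <= (hnorm ip x + hnorm ip y) ^+ 2.
  rewrite sqD. nra.
nra.
Qed.


Lemma polar_aux (w z : R[i]) :
  w + Num.conj w = z + Num.conj z ->
  (Complex 0 1) * w + Num.conj (Complex 0 1) * Num.conj w =
  (Complex 0 1) * z + Num.conj (Complex 0 1) * Num.conj z -> w = z.
Proof.
case: w => a b; case: z => c d. rewrite /Num.conj /=.
move=> [h1 h2] [h3 h4]. congr (_ +i* _); lra.
Qed.

Section Lin.
Variable T : H -> H.
Hypothesis hT : linear_op T.

Lemma T0 : T 0 = 0.
Proof.
have := hT 1 0 0. rewrite scale1r addr0 scale1r => h.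
by apply/(addrI (T 0)); rewrite addr0 -h.
Qed.
Lemma TD x y : T (x + y) = T x + T y.
Proof. by rewrite -{1}[x]scale1r hT scale1r. Qed.
Lemma TZ a x : T (a *: x) = a *: T x.
Proof. by rewrite -[a *: x]addr0 hT T0 addr0. Qed.
Lemma TN x : T (- x) = - T x.
Proof. by rewrite -scaleN1r TZ scaleN1r. Qed.
Lemma TB x y : T (x - y) = T x - T y.
Proof. by rewrite TD TN. Qed.
Lemma Tsum n (c : 'I_n -> R[i]) (v : 'I_n -> H) :
  T (\sum_(i < n) c i *: v i) = \sum_(i < n) c i *: T (v i).
Proof.
elim/big_rec2: _ => [|i y1 y2 _ IH]; first exact: T0.
rewrite TD TZ; congr (_ + _); by [rewrite IH | rewrite -IH].
Qed.
End Lin.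

Lemma cancel4 (a b w z c d : R[i]) : a + w + (c + b) = a + z + (d + b) -> w + c = z + d.
Proof.
move=> h. apply/eqP; rewrite -subr_eq0; apply/eqP.
have -> : w + c - (z + d) = (a + w + (c + b)) - (a + z + (d + b)) by ring.
by rewrite h subrr.
Qed.

Section Iso.
Variable T : H -> H.
Hypothesis hT : Defs.isometry ip T.

Lemma iso_self x : ip (T x) (T x) = ip x x.
Proof. by rewrite !ip_self hT.2. Qed.

Lemma iso_ip x y : ip (T x) (T y) = ip x y.
Proof.
have L := hT.1.
apply: polar_aux.
  have := iso_self (x + y).
  rewrite (TD L) !ipDl !ipDr !iso_self [ip (T y) (T x)]ipC [ip y x]ipC => h.
  exact: cancel4 h.
have := iso_self (Complex 0 1 *: x + y).
rewrite (TD L) (TZ L) !ipDl !ipDr !ipZl !ipZr !iso_self [ip (T y) (T x)]ipC [ip y x]ipC => h.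
exact: cancel4 h.
Qed.

Lemma iso_inj x y : T x = T y -> x = y.
Proof.
move=> h. apply/eqP; rewrite -subr_eq0; apply/eqP; apply: hnorm_eq0.
by rewrite -hT.2 (TB hT.1) h subrr hnorm0.
Qed.

End Iso.

Lemma GS (M : H -> Prop) (M0 : M 0)
  (Ml : forall a u v, M u -> M v -> M (a *: u + v)) :
  forall s : seq H, (forall a, a \in s -> M a) -> forall x, exists p,
  [/\ M p, (forall w, (forall a, a \in s -> ip w a = 0) -> ip w p = 0)
    & forall a, a \in s -> ip (x - p) a = 0].
Proof.
elim=> [|a0 s IH] Ms x.
  exists 0; split => //; first by move=> w _; rewrite ip0r.
have Ms' : forall a, a \in s -> M a by move=> a h; apply: Ms; rewrite in_cons h orbT.
have Ma0 := Ms a0 (mem_head _ _).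
have [p [Mp Pp Rp]] := IH Ms' x.
have [q [Mq Pq Rq]] := IH Ms' a0.
set a' := a0 - q.
have Ma' : M a' by rewrite /a' -scaleN1r addrC; apply: Ml.
have [g0 | gn0] := eqVneq (ip a' a') 0.
  have a0q : a0 = q.
    apply/eqP; rewrite -subr_eq0; apply/eqP. by case: hip => _ _ _ h; apply: h.
  exists p; split => //.
    by move=> w hw; apply: Pp => a ha; apply: hw; rewrite in_cons ha orbT.
  move=> a; rewrite in_cons => /orP[/eqP -> | ha]; last exact: Rp.
  by rewrite a0q; apply: Pq => b hb; exact: Rp.
set c := ip (x - p) a' / ip a' a'.
exists (p + c *: a'); split.
- by rewrite addrC; apply: Ml.
- move=> w hw.
  have wa0 : ip w a0 = 0 by apply: hw; exact: mem_head.
  have wq : ip w q = 0 by apply: Pq => a ha; apply: hw; rewrite in_cons ha orbT.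
  have wp : ip w p = 0 by apply: Pp => a ha; apply: hw; rewrite in_cons ha orbT.
  by rewrite ipDr ipZr /a' ipBr wa0 wq wp subrr mulr0 addr0.
have key : forall a, a \in s -> ip (x - (p + c *: a')) a = 0.
  move=> a ha. rewrite opprD addrA ipBl ipZl.
  have : ip a' a = 0 by exact: Rq.
  by move=> ->; rewrite mulr0 subr0; exact: Rp.
move=> a; rewrite in_cons => /orP[/eqP -> | ha]; last exact: key.
rewrite -[a0](subrK q) -/a' ipDr (Pq _ key) addr0.
by rewrite opprD addrA ipBl ipZl /c divfK // subrr.
Qed.


Lemma ip_suml n (c : 'I_n -> R[i]) (v : 'I_n -> H) z :
  ip (\sum_(i < n) c i *: v i) z = \sum_(i < n) c i * ip (v i) z.
Proof.
elim/big_rec2: _ => [|i y1 y2 _ IH]; first exact: ip0l.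
rewrite ipDl ipZl; congr (_ + _); by [rewrite IH | rewrite -IH].
Qed.

Lemma kernel (T : H -> H) (hT : linear_op T) (hinf : infinite_dimensional H)
  (s : seq H) : exists z, z != 0 /\ forall b, b \in s -> ip (T z) b = 0.
Proof.
set m := size s.
have [v hv] := hinf m.+1.
pose A : 'M[R[i]]_(m.+1, m) := \matrix_(l, i) ip (T (v l)) (nth 0 s i).
have nf : ~~ row_free A.
  apply/negP => /eqP h. by have := rank_leq_col A; rewrite h ltnn.
have /eqP K : kermx A != 0 by rewrite kermx_eq0.
have [i hi] : exists i, row i (kermx A) != 0.
  apply: contra_notP K => hn. apply/row_matrixP => i. rewrite row0.
  apply/eqP. apply: contra_notT hn => hi. by exists i.
set c := row i (kermx A) in hi.
have cA : c *m A = 0 by rewrite /c -row_mul mulmx_ker row0.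
exists (\sum_(l < m.+1) c 0 l *: v l); split.
  apply/eqP => hz. move/eqP: hi; apply. apply/rowP => l.
  by rewrite [RHS]mxE; apply: (hv (fun l => c 0 l) hz l).
move=> b hb.
have hj : (index b s < m)%N by rewrite index_mem.
rewrite (Tsum hT) ip_suml.
have := congr1 (fun M : 'M[R[i]]_(1, m) => M 0 (Ordinal hj)) cA. rewrite !mxE => h.
apply: (etrans _ h); apply: eq_bigr => l _. by rewrite /A !mxE /= (nth_index _ hb).
Qed.

End Basic.

Section Refl.
Variables (R : realType) (H : lmodType R[i]) (ip : H -> H -> R[i]).
Hypothesis hip : inner_product ip.

Definition refl (w v : H) := v - (2 * ip v w / ip w w) *: w.

Lemma refl_lin w : linear_op (refl w).
Proof.
move=> a x y. rewrite /refl (ipDl hip) (ipZl hip).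
have -> : 2 * (a * ip x w + ip y w) / ip w w =
  a * (2 * ip x w / ip w w) + 2 * ip y w / ip w w by ring.
by rewrite scalerDl scalerBr scalerA opprD addrACA.
Qed.

Lemma refl_fix w v : ip v w = 0 -> refl w v = v.
Proof. by move=> h; rewrite /refl h mulr0 mul0r scale0r subr0. Qed.

Lemma refl_ip w v : ip w w != 0 -> ip (refl w v) (refl w v) = ip v v.
Proof.
move=> g0.
have cg : Num.conj (ip w w) = ip w w by rewrite (ip_self hip w) conjR.
have c2 : Num.conj (2 : R[i]) = 2 by rewrite rmorph_nat.
rewrite /refl !(ipBl hip) !(ipBr hip) !(ipZl hip) !(ipZr hip).
rewrite [ip w v](ipC hip).
rewrite !rmorphM /= fmorphV /= cg c2.
field. exact: g0.
Qed.

Lemma ipww u r : ip u u = ip r r -> ip u r = 0 ->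
  ip (u - r) (u - r) = 2 * ip u u.
Proof.
move=> uu ur. rewrite !(ipBl hip) !(ipBr hip) [ip r u](ipC hip) ur.
rewrite -uu rmorph0. ring.
Qed.

Lemma refl_swap u r : ip u u = ip r r -> ip u r = 0 -> ip u u != 0 ->
  refl (u - r) u = r.
Proof.
move=> uu ur u0. rewrite /refl ipww // (ipBr hip) ur subr0 divff.
  by rewrite scale1r opprB addrC subrK.
by rewrite mulf_neq0 // pnatr_eq0.
Qed.

End Refl.

Section Construct.
Variables (R : realType) (H : lmodType R[i]) (ip : H -> H -> R[i]).
Hypothesis hip : inner_product ip.
Hypothesis hinf : infinite_dimensional H.

Lemma construct (T : H -> H) (hT : Defs.isometry ip T) n (y : 'I_n -> H) x :
  exists S, [/\ Defs.isometry ip S, forall i, S (y i) = T (y i) & exists z, S z = x].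
Proof.
have L := hT.1.
set s := [seq T (y i) | i <- enum 'I_n].
pose M := fun v => exists q, v = T q.
have M0 : M 0 by exists 0; rewrite (T0 L).
have Ml : forall a u v, M u -> M v -> M (a *: u + v).
  by move=> a u v [q1 ->] [q2 ->]; exists (a *: q1 + q2); rewrite L.
have Ms : forall a, a \in s -> M a by move=> a /mapP [i _ ->]; exists (y i).
have [p [[q0 pq0] Pp Rp]] := GS hip M0 Ml Ms x.
subst p.
set r := x - T q0.
have [r0 | rn0] := eqVneq r 0.
  exists T; split => //; exists q0.
  by apply/eqP; rewrite eq_sym -subr_eq0; apply/eqP.
have [z0 [z0n hz0]] := kernel hip L hinf (r :: s).
set hz := hnorm ip z0.
have hzn : hz != 0 by apply: contra z0n => /eqP h; apply/eqP; exact: hnorm_eq0 h.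
have hz0' : 0 <= hz by exact: hnorm_ge0.
set u := (hnorm ip r / hz)%:C *: T z0.
have hu : hnorm ip u = hnorm ip r.
  rewrite /u (hnormZ hip) hT.2 ger0_norm ?divfK //.
  by rewrite divr_ge0 // hnorm_ge0.
have uu : ip u u = ip r r by rewrite !(ip_self hip) hu.
have ub : forall b, b \in s -> ip u b = 0.
  by move=> b hb; rewrite /u (ipZl hip) hz0 ?mulr0 // in_cons hb orbT.
have ur : ip u r = 0 by rewrite /u (ipZl hip) hz0 ?mulr0 // mem_head.
have hrn : hnorm ip r != 0 by apply: contra rn0 => /eqP h; apply/eqP; exact: hnorm_eq0 h.
have u0 : ip u u != 0.
  by rewrite (ip_self hip) hu; apply: contra hrn => /eqP [] /eqP; rewrite sqrf_eq0.
set w := u - r.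
have g0 : ip w w != 0 by rewrite ipww // mulf_neq0 // pnatr_eq0.
exists (fun v => refl ip w (T v)); split.
- split.
    by move=> a v1 v2; rewrite L refl_lin.
  by move=> v; rewrite /hnorm refl_ip //; exact: hT.2.
- move=> i. apply: refl_fix.
  have hi : T (y i) \in s by apply: map_f; rewrite mem_enum.
  rewrite (ipBr hip) (ipC hip) ub // (ipC hip r (T (y i))) Rp //.
  by rewrite rmorph0 subrr.
- exists (q0 + (hnorm ip r / hz)%:C *: z0).
  rewrite (TD L) (TZ L) -/u (TD (refl_lin hip w)) refl_fix.
    by rewrite refl_swap // /r addrC subrK.
  rewrite (ipBr hip) (ipC hip) (Pp u ub) (ipC hip r (T q0)) (Pp r Rp).
  by rewrite rmorph0 subrr.
Qed.

End Construct.

Lemma inv_small (R : realType) (e : R) : 0 < e -> exists N : nat, (N.+1%:R)^-1 < e.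
Proof.
move=> e0. have he : 0 <= e^-1 by rewrite invr_ge0 ltW.
have := archi_boundP he.
set b := Num.bound _ => hb. exists b.
rewrite -[e]invrK ltf_pV2 ?posrE ?invr_gt0 ?ltr0Sn //.
apply: (lt_le_trans hb). by rewrite ler_nat.
Qed.

Lemma inv_mono (R : realType) (N m : nat) : (N <= m)%N -> (m.+1%:R)^-1 <= (N.+1%:R)^-1 :> R.
Proof. by move=> h; rewrite lef_pV2 ?posrE ?ltr0Sn // ler_nat ltnS. Qed.

Section Surj.
Variables (R : realType) (H : lmodType R[i]) (ip : H -> H -> R[i]).
Hypothesis hip : inner_product ip.
Hypothesis hc : complete_space ip.
Variable d : nat -> H.
Hypothesis hd : forall (x : H) (e : R), 0 < e -> exists j, hnorm ip (x - d j) < e.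
Variable T : H -> H.
Hypothesis hT : Defs.isometry ip T.
Hypothesis hdense : forall j k, exists y, hnorm ip (d j - T y) < (k.+1%:R)^-1.

Lemma approx x e : 0 < e -> exists y, hnorm ip (x - T y) < e.
Proof.
move=> e0. have e2 : 0 < e / 2 by rewrite divr_gt0.
have [k hk] := inv_small e2.
have [j hj] := hd x e2.
have [y hy] := hdense j k.
exists y. have -> : x - T y = (x - d j) + (d j - T y) by rewrite addrA subrK.
apply: (le_lt_trans (triangle hip _ _)).
rewrite [e](splitr e). apply: ltrD => //. exact: lt_trans hy hk.
Qed.

Lemma inv_pos (m : nat) : 0 < (m.+1%:R)^-1 :> R.
Proof. by rewrite invr_gt0 ltr0Sn. Qed.

Lemma iso_surj x : exists y, T y = x.
Proof.
have L := hT.1.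
pose ys (m : nat) := projT1 (cid (approx x (inv_pos m))).
have hys m : hnorm ip (x - T (ys m)) < (m.+1%:R)^-1.
  exact: (projT2 (cid (approx x (inv_pos m)))).
have dist m n : hnorm ip (ys m - ys n) <= hnorm ip (x - T (ys m)) + hnorm ip (x - T (ys n)).
  rewrite -hT.2 (TB L).
  have -> : T (ys m) - T (ys n) = (T (ys m) - x) + (x - T (ys n)) by rewrite addrA subrK.
  by rewrite -[hnorm ip (x - T (ys m))](hnormB hip) triangle.
have cauchy : forall e : R, 0 < e -> exists N, forall m n, (N <= m)%N -> (N <= n)%N ->
    hnorm ip (ys m - ys n) < e.
  move=> e e0. have e2 : 0 < e / 2 by rewrite divr_gt0.
  have [N hN] := inv_small e2.
  exists N => m n hm hn. apply: (le_lt_trans (dist m n)).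
  rewrite [e](splitr e). apply: ltrD.
    exact: lt_le_trans (hys m) (le_trans (inv_mono _ hm) (ltW hN)).
  exact: lt_le_trans (hys n) (le_trans (inv_mono _ hn) (ltW hN)).
have [l hl] := hc cauchy.
exists l. apply/eqP; rewrite -subr_eq0; apply/eqP; apply: (hnorm_eq0 hip).
have := hnorm_ge0 ip (T l - x); rewrite le_eqVlt => /orP[/eqP <- // | apos].
exfalso.
have a2 : 0 < hnorm ip (T l - x) / 2 by rewrite divr_gt0.
have [N1 hN1] := hl _ a2.
have [N2 hN2] := inv_small a2.
set n := maxn N1 N2.
have h1 := hN1 n (leq_maxl _ _).
have h2 : hnorm ip (x - T (ys n)) < hnorm ip (T l - x) / 2.
  exact: lt_le_trans (hys n) (le_trans (inv_mono _ (leq_maxr N1 N2)) (ltW hN2)).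
have : hnorm ip (T l - x) < hnorm ip (T l - x).
  have E : T l - x = (T l - T (ys n)) + (T (ys n) - x) by rewrite addrA subrK.
  have t := triangle hip (T l - T (ys n)) (T (ys n) - x).
  rewrite -E -(TB L) hT.2 (hnormB hip l) (hnormB hip (T (ys n))) in t.
  apply: (le_lt_trans t). by apply: (lt_le_trans (ltrD h1 h2)); rewrite -splitr.
by rewrite ltxx.
Qed.

Lemma surj_unitary : unitary ip T.
Proof.
have L := hT.1.
split => //.
pose S x := projT1 (cid (iso_surj x)).
have TS x : T (S x) = x by exact: (projT2 (cid (iso_surj x))).
exists S; split.
- by move=> x y; rewrite -{1}(TS y) (iso_ip hip hT).
- by move=> x; apply: (iso_inj hip hT); rewrite TS.
- exact: TS.
Qed.

End Surj.

Section Main.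
Variables (R : realType) (H : lmodType R[i]) (ip : H -> H -> R[i]).
Hypothesis hip : inner_product ip.
Hypothesis hinf : infinite_dimensional H.
Variable d : nat -> H.

Definition Nset (j k : nat) : set (H -> H) :=
  [set T | Defs.isometry ip T /\ ~ unitary ip T /\
     forall y, (k.+1%:R)^-1 <= hnorm ip (d j - T y)].

Lemma nd j k : nowhere_dense_in ip (isometries ip) (Nset j k).
Proof.
split; first by move=> T [].
apply/seteqP; split => T; last by [].
move=> [U [[sub hnb] sU UT]].
have [n [y [e [e0 hb]]]] := hnb T UT.
have [S [iS Sy [z Sz]]] := construct hip hinf (sub _ UT) y (d j).
have US : U S by apply: hb => // i; rewrite Sy subrr hnorm0.
have [_ cl] := sU S US.
pose V := [set Q | Defs.isometry ip Q /\ hnorm ip (Q z - S z) < (k.+1%:R)^-1].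
have oV : sot_open_in ip (isometries ip) V.
  split; first by move=> Q [].
  move=> Q [iQ hQ]. exists 1%N, (fun _ => z), ((k.+1%:R)^-1 - hnorm ip (Q z - S z)).
  split; first by rewrite subr_gt0.
  move=> Q' iQ' h. split => //. have := h ord0.
  have -> : Q' z - S z = (Q' z - Q z) + (Q z - S z) by rewrite addrA subrK.
  rewrite ltrBrDr => h1. apply: (le_lt_trans (triangle hip _ _) h1).
have VS : V S.
  split => //. rewrite subrr (hnorm0 hip). exact: inv_pos.
have [Q [[_ hQ] [_ [_ hN]]]] := cl V oV VS.
have := hN z. by rewrite -Sz (hnormB hip) leNgt hQ.
Qed.

End Main.

Theorem mainTheorem1 (R : realType) (H : lmodType R[i]) (ip : H -> H -> R[i])
  (hH : hilbert_space ip) (hsep : separable_space ip)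
  (hinf : infinite_dimensional H) :
  residual_in ip (isometries ip) (isometries ip `&` unitaries ip).
Proof.
have [hip hc] := hH.
have [d hd] := hsep.
split; first by move=> T [].
pose N (n : nat) : set (H -> H) :=
  match (unpickle n : option (nat * nat)) with
  | Some (j, k) => Nset ip d j k | None => set0 end.
exists N; split.
  move=> n; rewrite /N; case: (unpickle n) => [[j k]|]; first exact: nd.
  split => //. apply/seteqP; split => T // [U [oU sU UT]].
  have [_ cl] := sU T UT. by have [S [_ []]] := cl U oU UT.
apply/seteqP; split.
  move=> T [iT nU].
  have [j [k hjk]] : exists j k, forall y, (k.+1%:R)^-1 <= hnorm ip (d j - T y).
    apply: contrapT => hn. apply: nU; split; first exact: iT.
    apply: (surj_unitary hip hc hd iT) => j k.
    apply: contrapT => hy. apply: hn. exists j, k => y. rewrite leNgt.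
    apply/negP => hlt. apply: hy. by exists y.
  exists (pickle (j, k)) => //. rewrite /N pickleK.
  split => //; split => // hu; apply: nU; split; [exact: iT | exact: hu].
move=> T [n _]. rewrite /N. case: (unpickle n) => [[j k]|] // [iT [nu _]].
split => // [[_ u]]. exact: nu u.
Qed.
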